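(* Let $3\le k\le n/2$ be integers. There exists a pair $(\lambda,i)$ with $\lambda\in\mathcal{P}_{k,n}$ and $i$ an integer with $1\le i\le n-1$ such that $|\lambda|\ge k(n-k)-i$ and $\lambda$ is an $(n-i)$-core partition if and only if $(k,n)\in\{(3,6),(4,8),(3,9)\}$.
   Context: $\mathcal{P}_{k,n}=\{\lambda=(\lambda_1,\dots,\lambda_k)\in\mathbb{Z}^k: n-k\ge\lambda_1\ge\dots\ge\lambda_k\ge0\}$ and $|\lambda|=\sum_i\lambda_i$. The hook length of a cell in the Young diagram of $\lambda$ is the number of cells directly to its right or directly below it, plus one (the cell itself). For a positive integer $j$, $\lambda$ is a $j$-core partition if no cell of $\lambda$ has hook length $j$. *)

(* Defs.v *)
From mathcomp Require Import all_boot.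
Set Implicit Arguments. Unset Strict Implicit. Unset Printing Implicit Defensive.

(* A partition lambda = (lambda_1 >= ... >= lambda_k >= 0) is represented by
   the sequence [:: lambda_1; ...; lambda_k] of naturals (0-indexed rows). *)

Definition in_Pkn (k n : nat) (la : seq nat) : bool :=
  [&& size la == k, sorted geq la & all (fun x => x <= n - k) la].

Definition psize (la : seq nat) : nat := sumn la.

Definition in_diagram (la : seq nat) (r c : nat) : bool :=
  (r < size la) && (c < nth 0 la r).

(* Hook length of cell (r,c): cells to its right (arm), cells below it (leg),
   plus one. *)
Definition hook (la : seq nat) (r c : nat) : nat :=
  (nth 0 la r - c.+1) + count (fun x => c < x) (drop r.+1 la) + 1.

Definition is_core (j : nat) (la : seq nat) : Prop :=
  forall r c, in_diagram la r c -> hook la r c <> j.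

(* Main.v *)
Require Import Defs.
From mathcomp Require Import all_boot zify.
Set Implicit Arguments. Unset Strict Implicit. Unset Printing Implicit Defensive.

Lemma count_iota_lt (f : pred nat) m len e :
  m <= e <= m + len -> (forall i, m <= i < m + len -> f i = (i < e)) ->
  count f (iota m len) = e - m.
Proof.
move=> /andP[h1 h2] hf.
have -> : len = (e - m) + (m + len - e) by lia.
rewrite iotaD count_cat.
rewrite (@eq_in_count _ _ predT (iota m (e - m))); last first.
  move=> i; rewrite mem_iota => /andP[i1 i2]; rewrite hf /=; lia.
rewrite (@eq_in_count _ _ pred0 (iota (m + (e - m)) _)); last first.
  move=> i; rewrite mem_iota => /andP[i1 i2]; rewrite hf /=; lia.
by rewrite count_predT count_pred0 size_iota addn0.
Qed.

Lemma thresh (p : nat -> nat) k x :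
  (forall s s', s <= s' < k -> p s <= p s') ->
  exists sx, [/\ sx <= k, (forall s, s < sx -> p s < x) &
                 (forall s, sx <= s < k -> x <= p s)].
Proof.
elim: k => [|k IH] hm.
  by exists 0; split => // s; lia.
have [|sx [h1 h2 h3]] := IH.
  move=> s s' hs; apply: hm; lia.
case: (ltnP sx k) => [lt|ge].
  exists sx; split => //; first lia.
  move=> s /andP[s1 s2].
  case: (ltnP s k) => sk; first by apply: h3; lia.
  have e : s = k by lia.
  subst s. apply: (leq_trans (h3 sx _)); first lia.
  apply: hm; lia.
have e : sx = k by lia. subst sx.
case: (ltnP (p k) x) => pk.
  exists k.+1; split => // s hs.
    case: (ltnP s k) => sk; first by apply: h2.
    by have -> : s = k by lia.
  lia.
exists k; split => // s hs.
by have -> : s = k by lia.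
Qed.

Lemma sum_seg (g : nat -> nat) k a b va vb :
  a <= b <= k -> (forall s, a <= s < b -> va <= g s) ->
  (forall s, b <= s < k -> vb <= g s) ->
  (b - a) * va + (k - b) * vb <= \sum_(0 <= s < k) g s.
Proof.
move=> /andP[h1 h2] ha hb.
rewrite (@big_cat_nat _ _ _ a) //=; last lia.

rewrite (@big_cat_nat _ _ _ b a k) //=.
rewrite -!sum_nat_const_nat.
apply: (leq_trans _ (leq_addl _ _)).
apply: leq_add; rewrite big_nat_cond [X in _ <= X]big_nat_cond; apply: leq_sum => i;
  rewrite andbT => hi; [apply: ha | apply: hb]; lia.
Qed.
Lemma in_Pkn_facts k n la : in_Pkn k n la ->
  [/\ size la = k, forall s, s < k -> nth 0 la s <= n - k &
      forall s s', s <= s' < k -> nth 0 la s' <= nth 0 la s].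
Proof.
case/and3P => /eqP hs hso hall; split => //.
  move=> s hsk; move/allP: hall; apply; apply: mem_nth; by rewrite hs.
move=> s s' /andP[h1 h2].
have tr : transitive geq by move=> a b c /= h h'; lia.
have rf : reflexive geq by move=> a /=.
have := sorted_leq_nth tr rf 0 hso; rewrite hs.
by move=> /(_ s s'); apply => //; rewrite inE; lia.
Qed.

Lemma core_closure k n j la (hP : in_Pkn k n la) (hkn : k < n) (hj : 0 < j) (hc : is_core j la) s :
  s < k -> s + (n - k - nth 0 la s) + j < n ->
  exists2 s', s' < k & s' + (n - k - nth 0 la s') = s + (n - k - nth 0 la s) + j.
Proof.
have [hsz hle hmon] := in_Pkn_facts hP.
set l := fun s => nth 0 la s.
set P := fun s => s + (n - k - l s).
rewrite -/(l s) -/(P s).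
move=> hsk hsn.
case: (boolP (has (fun s' => P s' == P s + j) (iota 0 k))).
  move/hasP => [s' hs' /eqP e]; exists s' => //; move: hs'; rewrite mem_iota; lia.
move/hasP => hno; exfalso.
have H : forall s', s' < k -> P s' <> P s + j.
  move=> s' hs' e; apply: hno; exists s'; first by rewrite mem_iota; lia.
  by apply/eqP.
have Pm : forall s1 s2, s1 <= s2 < k -> P s1 + (s2 - s1) <= P s2.
  move=> s1 s2 hs12; rewrite /P.
  have := hmon _ _ hs12. have := hle s2. have := hle s1. rewrite /l. lia.
have [e [he1 he2 he3]] := @thresh P k (P s + j) (fun s1 s2 h => leq_trans (leq_addr _ _) (Pm s1 s2 h)).
have he3' : forall s', e <= s' < k -> P s + j < P s'.
  move=> s' hs'; have := he3 _ hs'; have := H s'; lia.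
have ls := hle s hsk. rewrite -/(l s) in ls.
have es1 : s < e.
  case: (ltnP s e) => // h; have := he3 s; lia.
have es2 : e <= s + j.
  case: (leqP e (s + j)) => // h.
  have := he2 (s + j) h; have := Pm s (s + j); lia.
have ez : P s + j - e <= n - k - 1.
  case: (ltnP e k) => h.
    have := he3' e; have := Pm e k.-1; have := hle k.-1; rewrite /P /l; lia.
  lia.
set c := n - k - 1 - (P s + j - e).
apply: (hc s c).
  rewrite /in_diagram hsz hsk /=; move: ls ez es2; rewrite /c /P /l; lia.
rewrite /hook -/(l s).
have -> : count (fun x => c < x) (drop s.+1 la) = e - s.+1.
  have hla : la = map l (iota 0 k) by rewrite -hsz /l -/(mkseq _ _) mkseq_nth.
  rewrite hla -map_drop drop_iota count_map add0n.
  apply: count_iota_lt; first lia.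
  move=> i /andP[i1 i2] /=.
  have hik : i < k by lia.
  have hsN := hle s hsk.
  have hiN := hle i hik.
  case: (ltnP i e) => hie.
    apply/idP; rewrite /c.
    have h1 : P e.-1 < P s + j by apply: he2; lia.
    have h2 : nth 0 la e.-1 <= nth 0 la i by apply: hmon; lia.
    move: h1 h2 ez es2 hsN hiN he1 hkn hie; rewrite /P /l; clear; lia.
  apply/negbTE; rewrite -leqNgt /c.
  have h1 : P s + j < P e by apply: he3'; lia.
  have h2 : nth 0 la i <= nth 0 la e by apply: hmon; lia.
  have h3 : nth 0 la e <= n - k by apply: hle; lia.
  move: h1 h2 h3 ez es2 hsN hiN he1 hkn hie; rewrite /P /l; clear; lia.
move: ls ez he1 es1 es2 hkn; rewrite /c /P /l; clear; lia.
Qed.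
Lemma count_or (T : Type) (f h : pred T) s : (forall x, ~~ (f x && h x)) ->
  count (fun x => f x || h x) s = count f s + count h s.
Proof.
move=> hd; rewrite -count_predUI.
rewrite (@eq_count _ (predI f h) pred0) ?count_pred0 ?addn0 //.
by move=> x /=; apply/negbTE.
Qed.

Definition W k j (p : nat -> nat) a := count (fun s => a <= p s < a + j) (iota 0 k).

Lemma W_step k n j (p : nat -> nat) :
  (forall s1 s2, s1 < s2 < k -> p s1 < p s2) ->
  (forall s, s < k -> p s + j < n -> exists2 s', s' < k & p s' = p s + j) ->
  0 < j -> forall a, a + j < n -> W k j p a <= W k j p a.+1.
Proof.
move=> hinc hcl hj a ha; rewrite /W.
rewrite (@eq_count _ _ (fun s => (p s == a) || (a.+1 <= p s < a + j))); last first.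
  move=> s /=; apply/idP/idP; [move=> /andP[h1 h2]|move=> /orP[/eqP h|/andP[h1 h2]]];
   try (apply/orP); try (apply/andP); lia.
rewrite (@eq_count _ (fun s => a.+1 <= p s < a.+1 + j) (fun s => (a.+1 <= p s < a + j) || (p s == a + j))); last first.
  move=> s /=; apply/idP/idP; [move=> /andP[h1 h2]|move=> /orP[/andP[h1 h2]|/eqP h]];
   try (apply/orP); try (apply/andP); lia.
rewrite !count_or; first last.
  by move=> s /=; apply/negP; lia.
  by move=> s /=; apply/negP; lia.
rewrite addnC leq_add2l.
have hu : uniq (map p (iota 0 k)).
  rewrite map_inj_in_uniq ?iota_uniq // => x y; rewrite !mem_iota => hx hy e.
  case: (ltngtP x y) => // h.
    by have := hinc x y; rewrite e; lia.
  by have := hinc y x; rewrite e; lia.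
have -> : count (fun s => p s == a) (iota 0 k) = count_mem a (map p (iota 0 k)).
  by rewrite count_map; apply: eq_count => s /=; rewrite eq_sym.
have -> : count (fun s => p s == a + j) (iota 0 k) = count_mem (a + j) (map p (iota 0 k)).
  by rewrite count_map; apply: eq_count => s /=; rewrite eq_sym.
rewrite !count_uniq_mem //.
case: (boolP (a \in _)) => //= /mapP [s hs e].
move: hs; rewrite mem_iota add0n => /andP[_ hs].
have [s' hs' e'] := hcl s hs (ltac:(rewrite -e; exact: ha)).
suff -> : a + j \in map p (iota 0 k) by [].
by apply/mapP; exists s'; rewrite ?mem_iota //= e' e.
Qed.

Lemma W_le k n j (p : nat -> nat) :
  (forall s1 s2, s1 < s2 < k -> p s1 < p s2) ->
  (forall s, s < k -> p s + j < n -> exists2 s', s' < k & p s' = p s + j) ->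
  0 < j -> forall a, a + j <= n -> W k j p a <= W k j p (n - j).
Proof.
move=> hinc hcl hj a ha.
have H : forall d, d <= n - j -> W k j p (n - j - d) <= W k j p (n - j).
  elim => [|d IH] hd; first by rewrite subn0.
  apply: leq_trans (IH _); last lia.
  have -> : n - j - d = (n - j - d.+1).+1 by lia.
  apply: (W_step (n := n)) => //; lia.
have := H (n - j - a); have -> : n - j - (n - j - a) = a by lia.
by apply; lia.
Qed.

Lemma W_two k j (p : nat -> nat) s : s.+1 < k -> p s <= p s.+1 < p s + j ->
  2 <= W k j p (p s).
Proof.
move=> hk hp; rewrite /W.
have -> : k = s + (k - s) by lia.
rewrite iotaD count_cat.
have -> : k - s = (k - s - 2).+2 by lia.
rewrite add0n /=.
have h1 : p s <= p s < p s + j by apply/andP; split; lia.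
rewrite h1 hp /=; lia.
Qed.

Lemma sum3 (g : nat -> nat) k : 3 <= k ->
  g (k - 3) + g (k - 2) + g (k - 1) <= \sum_(0 <= s < k) g s.
Proof.
case: k => [|[|[|m]]] // _.
rewrite !big_nat_recr //= !subSS !subn0.
lia.
Qed.

Lemma ar1 k n j X G1 G2 G3 : 3 <= k -> 2 * k <= n -> 0 < j -> j < n ->
  (k - 1) + G1 = X + (k - 1) * j -> (k - 2) + G2 = X + (k - 2) * j -> (k - 3) + G3 = X + (k - 3) * j ->
  G1 + G2 + G3 <= n - j -> n - j <= (k - 1) + G1 ->
  (k == 3) && (n == 6) || (k == 4) && (n == 8) || (k == 3) && (n == 9).
Proof.
move=> *.
have : j <= 3 by nia.
have : k <= 4 \/ j = 1 by nia.
nia.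
Qed.

Lemma ar2 k n j a b : 3 <= k -> 2 * k <= n -> 0 < j -> j < n ->
  a <= j -> b <= n - j -> a + b <= k -> b + 2 <= k -> j <= n - j -> a <= b ->
  (b - a) * (j - a) + (k - b) * (n - j - b) <= n - j -> (k == 4) && (n == 8).
Proof.
move=> *. nia.
Qed.

Lemma ar3 k n j a b : 3 <= k -> 2 * k <= n -> 0 < j -> j < n ->
  a <= j -> b <= n - j -> a + b <= k -> b + 2 <= k -> n - j < j -> b <= a ->
  (a - b) * (n - j - b) + (k - a) * (j - a) <= n - j -> (k == 4) && (n == 8).
Proof.
move=> *. nia.
Qed.

Lemma comb k n j (g : nat -> nat) :
  3 <= k -> 2 * k <= n -> 0 < j -> j < n ->
  (forall s s', s <= s' < k -> g s <= g s') ->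
  (forall s, s < k -> s + g s < n) ->
  (forall s, s < k -> s + g s + j < n ->
     exists2 s', s' < k & s' + g s' = s + g s + j) ->
  \sum_(0 <= s < k) g s <= n - j ->
  (k == 3) && (n == 6) || (k == 4) && (n == 8) || (k == 3) && (n == 9).
Proof.
move=> hk hkn hj hjn gm pn hcl hsum.
pose p := fun s => s + g s.
have hcl' : forall s, s < k -> p s + j < n -> exists2 s', s' < k & p s' = p s + j.
  by move=> s hs h; apply: hcl.
have pm : forall s1 s2, s1 <= s2 < k -> p s1 + (s2 - s1) <= p s2.
  move=> s1 s2 h; have := gm _ _ h; rewrite /p; lia.
have pinc : forall s1 s2, s1 < s2 < k -> p s1 < p s2.
  move=> s1 s2 h; have := pm s1 s2; lia.
have pmono : forall s1 s2, s1 <= s2 < k -> p s1 <= p s2.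
  move=> s1 s2 h; have := pm s1 s2 h; lia.
have [a [ha1 ha2 ha3]] := @thresh p k j pmono.
have [b [hb1 hb2 hb3]] := @thresh p k (n - j) pmono.
have haj : a <= j.
  case: (leqP a j) => // h; have := ha2 j h; rewrite /p; lia.
have hbt : b <= n - j.
  case: (leqP b (n - j)) => // h; have := hb2 (n - j) h; rewrite /p; lia.
have ga : forall s, a <= s < k -> j - a <= g s.
  move=> s hs; have := ha3 a; have := gm a s; rewrite /p; lia.
have gb : forall s, b <= s < k -> n - j - b <= g s.
  move=> s hs; have := hb3 b; have := gm b s; rewrite /p; lia.
have hbk : b < k.
  case: (ltnP b k) => // h.
  have h1 := hb2 k.-1 ltac:(lia).
  have [s' hs' e] := hcl' k.-1 ltac:(lia) ltac:(lia).
  have := pmono s' k.-1; lia.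
have Wa : W k j p 0 = a.
  rewrite /W -(subn0 a); apply: count_iota_lt; first lia.
  move=> i hi; have := ha2 i; have := ha3 i; case: (ltnP i a) => h; lia.
have Wt : W k j p (n - j) = k - b.
  have e1 : count (fun s => s < b) (iota 0 k) = b.
    rewrite (@count_iota_lt _ 0 k b) ?subn0 //; lia.
  have e2 : W k j p (n - j) = count (predC (fun s => s < b)) (iota 0 k).
    rewrite /W; apply: eq_in_count => i; rewrite mem_iota add0n => /andP[_ hi] /=.
    have := hb2 i; have := hb3 i; have := pn i hi; rewrite /p; case: (ltnP i b) => h; lia.
  rewrite e2; have := count_predC (fun s => s < b) (iota 0 k); rewrite size_iota e1; lia.
have hab : a + b <= k.
  have := @W_le k n j p pinc hcl' hj 0 ltac:(lia); rewrite Wa Wt; lia.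
case: (leqP (b + 2) k) => hb2k.
  case: (leqP j (n - j)) => hjt.
    have hab' : a <= b.
      case: (leqP a b) => // h; have := ha2 b h; have := hb3 b; lia.
    have := @sum_seg g k a b (j - a) (n - j - b) ltac:(lia)
      (fun s hs => ga s ltac:(lia)) gb.
    move=> hs; have := @ar2 k n j a b hk hkn hj hjn haj hbt hab hb2k hjt hab' ltac:(lia).
    by move=> /andP[/eqP -> /eqP ->].
  have hab' : b <= a.
    case: (leqP b a) => // h; have := hb2 a h; have := ha3 a; lia.
  have := @sum_seg g k b a (n - j - b) (j - a) ltac:(lia)
    (fun s hs => gb s ltac:(lia)) ga.
  move=> hs; have := @ar3 k n j a b hk hkn hj hjn haj hbt hab hb2k hjt hab' ltac:(lia).
  by move=> /andP[/eqP -> /eqP ->].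
have hb : b = k.-1 by lia.
have step : forall s, s.+1 < k -> p s.+1 = p s + j.
  move=> s hs.
  have hps : p s < n - j by apply: hb2; lia.
  have [s' hs' e] := hcl' s ltac:(lia) ltac:(lia).
  have hss' : s < s'.
    case: (ltnP s s') => // h; have := pmono s' s; lia.
  have up : p s.+1 <= p s + j by rewrite -e; apply: pmono; lia.
  case: (ltnP (p s.+1) (p s + j)) => h; last lia.
  have := @W_two k j p s hs ltac:(have := pinc s s.+1; lia).
  have := @W_le k n j p pinc hcl' hj (p s) ltac:(lia).
  rewrite Wt; lia.
have chain : forall s, s < k -> p s = p 0 + s * j.
  elim => [|s IH] hs; first by rewrite mul0n addn0.
  rewrite step // IH; lia.
have h1 := chain k.-1 ltac:(lia).
have h2 := chain (k - 2) ltac:(lia).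
have h3 := chain (k - 3) ltac:(lia).
have hs3 := sum3 g hk.
have hlast := hb3 k.-1 ltac:(lia).
apply: (@ar1 k n j (p 0) (g (k - 1)) (g (k - 2)) (g (k - 3))) => //.
- by move: h1; rewrite /p; have -> : k.-1 = k - 1 by lia.
- lia.
- move: hlast; rewrite /p; have -> : k.-1 = k - 1 by lia. lia.
Qed.

Lemma core_check j la :
  all (fun r => all (fun c => hook la r c != j) (iota 0 (nth 0 la r))) (iota 0 (size la)) ->
  is_core j la.
Proof.
move=> /allP H r c /andP[hr hc].
have := H r; rewrite mem_iota hr => /(_ isT) /allP /(_ c).
by rewrite mem_iota hc => /(_ isT) /eqP.
Qed.

Theorem lemma3p3 (k n : nat) (hk : 3 <= k) (hkn : 2 * k <= n) :
  (exists (la : seq nat) (i : nat),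
      [/\ in_Pkn k n la, 1 <= i <= n - 1,
          k * (n - k) - i <= psize la & is_core (n - i) la])
  <-> (k, n) \in [:: (3, 6); (4, 8); (3, 9)].
Proof.
split.
- move=> [la [i [hP /andP[hi1 hi2] hsz hcore]]].
  have [hs hle hmon] := in_Pkn_facts hP.
  pose g := fun s => n - k - nth 0 la s.
  have hsum : sumn la = \sum_(0 <= s < k) nth 0 la s.
    by rewrite -{1}(mkseq_nth 0 la) hs /mkseq sumnE big_map /index_iota subn0.
  have hsplit : \sum_(0 <= s < k) g s + \sum_(0 <= s < k) nth 0 la s = k * (n - k).
    rewrite -big_split /=.
    rewrite (@eq_big_nat _ _ _ 0 k _ (fun _ => n - k)); last first.
      by move=> s hsk; rewrite /g subnK //; apply: hle; lia.
    by rewrite sum_nat_const_nat subn0.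
  have := @comb k n (n - i) g hk hkn ltac:(lia) ltac:(lia).
  have H : (k == 3) && (n == 6) || (k == 4) && (n == 8) || (k == 3) && (n == 9).
    apply: (@comb k n (n - i) g hk hkn ltac:(lia) ltac:(lia)).
    + move=> s s' hss'; have := hmon s s' hss'; rewrite /g; lia.
    + move=> s hsk; have := hle s hsk; rewrite /g; lia.
    + move=> s hsk hlt.
      have [s' hs' e] := @core_closure k n (n - i) la hP ltac:(lia) ltac:(lia) hcore s hsk hlt.
      by exists s'.
    + move: hsz; rewrite /psize hsum; lia.
  move=> _.
  by case/orP: H => [/orP[H|H]|H]; case/andP: H => /eqP -> /eqP ->.
- rewrite !inE => /orP[/eqP [-> ->]|/orP[/eqP [-> ->]|/eqP [-> ->]]].
  + exists [:: 3; 2; 1], 4; split => //; by apply: core_check.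
  + exists [:: 4; 3; 2; 1], 6; split => //; by apply: core_check.
  + exists [:: 6; 4; 2], 6; split => //; by apply: core_check.
Qed.
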